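(* In the setting below, suppose $u(s,t,q)=l(s,q)U(t)$, $v(s,t,q)=m(s,q)V(t)$, $w(s,t,q)=n(s,q)W(t)$, $x(s,t,q)=p(s,q)X(t)$ with all factors of class $C^1$, and assume $U(t_0)=U'(t_0)=V(t_0)=V'(t_0)=0$. Then $\mathbf r$ is an isogeodesic of $\mathbf P$ at $(t_0,q_0)$ if and only if for all $s\in[L_1,L_2]$: $$n(s,q_0)W(t_0)=0,\qquad p(s,q_0)X(t_0)=0,$$ $$n(s,q_0)\,W'(t_0)\,\frac{\partial p}{\partial q}(s,q_0)\,X(t_0)-\frac{\partial n}{\partial q}(s,q_0)\,W(t_0)\,p(s,q_0)\,X'(t_0)\neq0.$$
   Context: $\mathbf r:[L_1,L_2]\to\mathbb R^4$ is an arc-length curve with Frenet frame $\{\mathbf T,\mathbf N,\mathbf B_1,\mathbf B_2\}$ (orthonormal, $\mathbf T=\mathbf r'$, $\mathbf T'=k_1\mathbf N$, $\mathbf N'=-k_1\mathbf T+k_2\mathbf B_1$, $\mathbf B_1'=-k_2\mathbf N+k_3\mathbf B_2$, $\mathbf B_2'=-k_3\mathbf B_1$, $k_1>0$), and $\mathbf P(s,t,q)=\mathbf r(s)+u\mathbf T(s)+v\mathbf N(s)+w\mathbf B_1(s)+x\mathbf B_2(s)$ on $[L_1,L_2]\times[T_1,T_2]\times[Q_1,Q_2]$, with $t_0\in[T_1,T_2]$, $q_0\in[Q_1,Q_2]$ fixed. ''$\mathbf r$ is an isogeodesic of $\mathbf P$ at $(t_0,q_0)$'' means: $\mathbf P(s,t_0,q_0)=\mathbf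 r(s)$ for all $s$, $\partial_s\mathbf P,\partial_t\mathbf P,\partial_q\mathbf P$ are linearly independent at $(s,t_0,q_0)$, and $\mathbf N(s)$ is parallel to the normal $\partial_s\mathbf P\otimes\partial_t\mathbf P\otimes\partial_q\mathbf P$ (four-dimensional vector product) at $(s,t_0,q_0)$, for all $s$. *)

(* Defs.v *)
From Stdlib Require Import Reals.
Open Scope R_scope.

Record V4 := mkV4 { c0 : R; c1 : R; c2 : R; c3 : R }.

Definition vzero : V4 := mkV4 0 0 0 0.
Definition vadd (a b : V4) : V4 :=
  mkV4 (c0 a + c0 b) (c1 a + c1 b) (c2 a + c2 b) (c3 a + c3 b).
Definition vscale (k : R) (a : V4) : V4 :=
  mkV4 (k * c0 a) (k * c1 a) (k * c2 a) (k * c3 a).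
Definition dot (a b : V4) : R :=
  c0 a * c0 b + c1 a * c1 b + c2 a * c2 b + c3 a * c3 b.

Definition vderiv (f : R -> V4) (t : R) (d : V4) : Prop :=
  derivable_pt_lim (fun y => c0 (f y)) t (c0 d) /\
  derivable_pt_lim (fun y => c1 (f y)) t (c1 d) /\
  derivable_pt_lim (fun y => c2 (f y)) t (c2 d) /\
  derivable_pt_lim (fun y => c3 (f y)) t (c3 d).

Definition det3 (a1 a2 a3 b1 b2 b3 x1 x2 x3 : R) : R :=
  a1 * (b2 * x3 - b3 * x2) - a2 * (b1 * x3 - b3 * x1) + a3 * (b1 * x2 - b2 * x1).

(* Four-dimensional vector product a (x) b (x) c : the formal determinant
   with first row the standard basis e0,e1,e2,e3 and rows a, b, c. *)
Definition cross4 (a b c : V4) : V4 :=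
  mkV4
    (det3 (c1 a) (c2 a) (c3 a) (c1 b) (c2 b) (c3 b) (c1 c) (c2 c) (c3 c))
    (- det3 (c0 a) (c2 a) (c3 a) (c0 b) (c2 b) (c3 b) (c0 c) (c2 c) (c3 c))
    (det3 (c0 a) (c1 a) (c3 a) (c0 b) (c1 b) (c3 b) (c0 c) (c1 c) (c3 c))
    (- det3 (c0 a) (c1 a) (c2 a) (c0 b) (c1 b) (c2 b) (c0 c) (c1 c) (c2 c)).

Definition lin_indep3 (a b c : V4) : Prop :=
  forall x y z : R,
    vadd (vscale x a) (vadd (vscale y b) (vscale z c)) = vzero ->
    x = 0 /\ y = 0 /\ z = 0.

Definition parallel (a b : V4) : Prop := exists k : R, a = vscale k b.

Definition frenet_curve (r T N B1 B2 : R -> V4) (k1 k2 k3 : R -> R) : Prop :=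
  (forall s,
     dot (T s) (T s) = 1 /\ dot (N s) (N s) = 1 /\
     dot (B1 s) (B1 s) = 1 /\ dot (B2 s) (B2 s) = 1 /\
     dot (T s) (N s) = 0 /\ dot (T s) (B1 s) = 0 /\ dot (T s) (B2 s) = 0 /\
     dot (N s) (B1 s) = 0 /\ dot (N s) (B2 s) = 0 /\ dot (B1 s) (B2 s) = 0) /\
  (forall s, vderiv r s (T s)) /\
  (forall s, vderiv T s (vscale (k1 s) (N s))) /\
  (forall s, vderiv N s (vadd (vscale (- k1 s) (T s)) (vscale (k2 s) (B1 s)))) /\
  (forall s, vderiv B1 s (vadd (vscale (- k2 s) (N s)) (vscale (k3 s) (B2 s)))) /\
  (forall s, vderiv B2 s (vscale (- k3 s) (B1 s))) /\
  (forall s, 0 < k1 s).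

Definition surfP (r T N B1 B2 : R -> V4) (u v w x : R -> R -> R -> R)
  (s t q : R) : V4 :=
  vadd (r s) (vadd (vscale (u s t q) (T s)) (vadd (vscale (v s t q) (N s))
    (vadd (vscale (w s t q) (B1 s)) (vscale (x s t q) (B2 s))))).

Definition isogeodesic (P : R -> R -> R -> V4) (r N : R -> V4)
  (L1 L2 t0 q0 : R) : Prop :=
  forall s, L1 <= s <= L2 ->
    P s t0 q0 = r s /\
    exists Ps Pt Pq : V4,
      vderiv (fun y => P y t0 q0) s Ps /\
      vderiv (fun y => P s y q0) t0 Pt /\
      vderiv (fun y => P s t0 y) q0 Pq /\
      lin_indep3 Ps Pt Pq /\
      parallel (cross4 Ps Pt Pq) (N s).

Definition cont2 (f : R -> R -> R) : Prop :=
  forall a b eps, 0 < eps -> exists del, 0 < del /\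
    forall a' b', Rabs (a' - a) < del -> Rabs (b' - b) < del ->
      Rabs (f a' b' - f a b) < eps.

Definition C1_2 (f fs fq : R -> R -> R) : Prop :=
  (forall s q, derivable_pt_lim (fun y => f y q) s (fs s q)) /\
  (forall s q, derivable_pt_lim (fun y => f s y) q (fq s q)) /\
  cont2 fs /\ cont2 fq.

Definition C1_1 (g g' : R -> R) : Prop :=
  (forall t, derivable_pt_lim g t (g' t)) /\ continuity g'.

(* Main.v *)
Require Import Defs.
From Stdlib Require Import Reals Lra.
Open Scope R_scope.

Definition det4 (a11 a12 a13 a14 a21 a22 a23 a24 a31 a32 a33 a34 a41 a42 a43 a44 : R) : R :=
  a11 * det3 a22 a23 a24 a32 a33 a34 a42 a43 a44
  - a12 * det3 a21 a23 a24 a31 a33 a34 a41 a43 a44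
  + a13 * det3 a21 a22 a24 a31 a32 a34 a41 a42 a44
  - a14 * det3 a21 a22 a23 a31 a32 a33 a41 a42 a43.

Lemma gram4 a b c e : (dot (cross4 a b c) e)^2 =
  det4 (dot a a) (dot a b) (dot a c) (dot a e)
       (dot b a) (dot b b) (dot b c) (dot b e)
       (dot c a) (dot c b) (dot c c) (dot c e)
       (dot e a) (dot e b) (dot e c) (dot e e).
Proof.
  destruct a as [a0 a1 a2 a3], b as [b0 b1 b2 b3], c as [d0 d1 d2 d3], e as [e0 e1 e2 e3].
  unfold det4, dot, cross4, det3; cbn [Defs.c0 Defs.c1 Defs.c2 Defs.c3]. ring.
Qed.

Lemma gram3 a b c : dot (cross4 a b c) (cross4 a b c) =
  det3 (dot a a) (dot a b) (dot a c)
       (dot b a) (dot b b) (dot b c)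
       (dot c a) (dot c b) (dot c c).
Proof.
  destruct a as [a0 a1 a2 a3], b as [b0 b1 b2 b3], c as [d0 d1 d2 d3].
  unfold dot, cross4, det3; cbn [Defs.c0 Defs.c1 Defs.c2 Defs.c3]. ring.
Qed.

Lemma dot_comm a b : dot a b = dot b a.
Proof. unfold dot; ring. Qed.

Lemma V4_ext a b : Defs.c0 a = Defs.c0 b -> Defs.c1 a = Defs.c1 b ->
  Defs.c2 a = Defs.c2 b -> Defs.c3 a = Defs.c3 b -> a = b.
Proof. destruct a, b; simpl; intros; subst; reflexivity. Qed.

Lemma vderiv_uniq f x a b : vderiv f x a -> vderiv f x b -> a = b.
Proof.
  intros [A0 [A1 [A2 A3]]] [B0 [B1 [B2 B3]]].
  apply V4_ext; eapply uniqueness_limite; eassumption.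
Qed.

Lemma sumsq_id C N k : (Defs.c0 C - k * Defs.c0 N)^2 + (Defs.c1 C - k * Defs.c1 N)^2
     + (Defs.c2 C - k * Defs.c2 N)^2 + (Defs.c3 C - k * Defs.c3 N)^2
     = dot C C - 2 * k * dot C N + k^2 * dot N N.
Proof. unfold dot; ring. Qed.

Lemma sq4 a b c d : a^2 + b^2 + c^2 + d^2 = 0 -> a = 0 /\ b = 0 /\ c = 0 /\ d = 0.
Proof.
  intros H. assert (0 <= a^2) by nra. assert (0 <= b^2) by nra.
  assert (0 <= c^2) by nra. assert (0 <= d^2) by nra.
  repeat split; nra.
Qed.

Lemma frame_par T N B1 B2 :
  dot T T = 1 -> dot N N = 1 -> dot B1 B1 = 1 -> dot B2 B2 = 1 ->
  dot T N = 0 -> dot T B1 = 0 -> dot T B2 = 0 ->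
  dot N B1 = 0 -> dot N B2 = 0 -> dot B1 B2 = 0 ->
  cross4 T B1 B2 = vscale (dot (cross4 T B1 B2) N) N.
Proof.
  intros hTT hNN h11 h22 hTN hT1 hT2 hN1 hN2 h12.
  assert (G3 := gram3 T B1 B2).
  rewrite (dot_comm B1 T), (dot_comm B2 T), (dot_comm B2 B1) in G3.
  rewrite hTT, h11, h22, hT1, hT2, h12 in G3.
  assert (G4 := gram4 T B1 B2 N).
  rewrite (dot_comm B1 T), (dot_comm B2 T), (dot_comm B2 B1), (dot_comm N T),
    (dot_comm B1 N), (dot_comm B2 N) in G4.
  rewrite hTT, h11, h22, hT1, hT2, h12, hTN, hN1, hN2, hNN in G4.
  assert (HCC : dot (cross4 T B1 B2) (cross4 T B1 B2) = 1) by (rewrite G3; unfold det3; ring).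
  assert (Hk2 : (dot (cross4 T B1 B2) N)^2 = 1) by (rewrite G4; unfold det4, det3; ring).
  assert (HS := sumsq_id (cross4 T B1 B2) N (dot (cross4 T B1 B2) N)).
  rewrite HCC, hNN in HS.
  revert HS Hk2. generalize (cross4 T B1 B2) (dot (cross4 T B1 B2) N).
  intros C k HS Hk2.
  assert (HS0 : (Defs.c0 C - k * Defs.c0 N)^2 + (Defs.c1 C - k * Defs.c1 N)^2
     + (Defs.c2 C - k * Defs.c2 N)^2 + (Defs.c3 C - k * Defs.c3 N)^2 = 0) by (rewrite HS; replace (1 - 2 * k * k + k ^ 2 * 1) with (1 - k^2) by ring; rewrite Hk2; ring).
  clear HS. apply sq4 in HS0. destruct HS0 as [e0 [e1 [e2 e3]]].
  apply V4_ext; unfold vscale; cbn [Defs.c0 Defs.c1 Defs.c2 Defs.c3]; lra.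
Qed.

Ltac cb := cbn [Defs.c0 Defs.c1 Defs.c2 Defs.c3].

Lemma pr_alg (B1 B2 : V4) a b : dot B1 B1 = 1 -> dot B2 B2 = 1 -> dot B1 B2 = 0 ->
  (forall i : V4 -> R, (i = Defs.c0 \/ i = Defs.c1 \/ i = Defs.c2 \/ i = Defs.c3) ->
     a * i B1 + b * i B2 = 0) -> a = 0 /\ b = 0.
Proof.
  intros h11 h22 h12 H.
  pose proof (H _ (or_introl eq_refl)) as E0.
  pose proof (H _ (or_intror (or_introl eq_refl))) as E1.
  pose proof (H _ (or_intror (or_intror (or_introl eq_refl)))) as E2.
  pose proof (H _ (or_intror (or_intror (or_intror eq_refl)))) as E3.
  assert (Ha : a * dot B1 B1 + b * dot B1 B2 =
    Defs.c0 B1 * (a * Defs.c0 B1 + b * Defs.c0 B2) + Defs.c1 B1 * (a * Defs.c1 B1 + b * Defs.c1 B2)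
    + Defs.c2 B1 * (a * Defs.c2 B1 + b * Defs.c2 B2) + Defs.c3 B1 * (a * Defs.c3 B1 + b * Defs.c3 B2))
    by (unfold dot; ring).
  assert (Hb : a * dot B1 B2 + b * dot B2 B2 =
    Defs.c0 B2 * (a * Defs.c0 B1 + b * Defs.c0 B2) + Defs.c1 B2 * (a * Defs.c1 B1 + b * Defs.c1 B2)
    + Defs.c2 B2 * (a * Defs.c2 B1 + b * Defs.c2 B2) + Defs.c3 B2 * (a * Defs.c3 B1 + b * Defs.c3 B2))
    by (unfold dot; ring).
  rewrite E0, E1, E2, E3, h11, h12 in Ha. rewrite E0, E1, E2, E3, h22, h12 in Hb.
  split; lra.
Qed.

Lemma dep_alg (B1 B2 Ps : V4) al be ga de :
  lin_indep3 Ps (vadd (vscale al B1) (vscale be B2)) (vadd (vscale ga B1) (vscale de B2)) ->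
  al * de - be * ga <> 0.
Proof.
  intros Hind HD.
  assert (HD' : al * de = be * ga) by lra.
  destruct (Req_dec al 0) as [Ha | Ha].
  - destruct (Req_dec be 0) as [Hb | Hb].
    + destruct (Hind 0 1 0) as [_ [H1 _]].
      * apply V4_ext; unfold vadd, vscale, vzero; cb; rewrite Ha, Hb; ring.
      * lra.
    + destruct (Hind 0 de (- be)) as [_ [_ H1]].
      * apply V4_ext; unfold vadd, vscale, vzero; cb.
        all: assert (Hg : ga = 0) by (rewrite Ha in HD';
               destruct (Rmult_integral be ga) as [|]; [lra|lra|assumption]).
        all: rewrite Ha, Hg; ring.
      * lra.
  - destruct (Hind 0 ga (- al)) as [_ [_ H1]].
    + apply V4_ext; unfold vadd, vscale, vzero; cb.
      * transitivity ((ga * be - al * de) * Defs.c0 B2); [ring | rewrite HD'; ring].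
      * transitivity ((ga * be - al * de) * Defs.c1 B2); [ring | rewrite HD'; ring].
      * transitivity ((ga * be - al * de) * Defs.c2 B2); [ring | rewrite HD'; ring].
      * transitivity ((ga * be - al * de) * Defs.c3 B2); [ring | rewrite HD'; ring].
    + lra.
Qed.

Ltac getl H := match type of H with ?L = _ => L end.

Lemma indep_alg (T B1 B2 : V4) c1 c2 al be ga de :
  dot T T = 1 -> dot B1 B1 = 1 -> dot B2 B2 = 1 ->
  dot T B1 = 0 -> dot T B2 = 0 -> dot B1 B2 = 0 ->
  al * de - be * ga <> 0 ->
  lin_indep3 (vadd T (vadd (vscale c1 B1) (vscale c2 B2)))
    (vadd (vscale al B1) (vscale be B2)) (vadd (vscale ga B1) (vscale de B2)).
Proof.
  intros hTT h11 h22 hT1 hT2 h12 HD x y z Heq.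
  pose proof (f_equal Defs.c0 Heq) as E0. pose proof (f_equal Defs.c1 Heq) as E1.
  pose proof (f_equal Defs.c2 Heq) as E2. pose proof (f_equal Defs.c3 Heq) as E3.
  unfold vadd, vscale, vzero in E0, E1, E2, E3. cbn [Defs.c0 Defs.c1 Defs.c2 Defs.c3] in E0, E1, E2, E3.
  match type of E0 with ?L = _ => set (L0 := L) in E0 end.
  match type of E1 with ?L = _ => set (L1 := L) in E1 end.
  match type of E2 with ?L = _ => set (L2 := L) in E2 end.
  match type of E3 with ?L = _ => set (L3 := L) in E3 end.
  assert (HT : x * dot T T + (x*c1 + y*al + z*ga) * dot T B1 + (x*c2 + y*be + z*de) * dot T B2 = 0)
   by (transitivity (Defs.c0 T * L0 + Defs.c1 T * L1 + Defs.c2 T * L2 + Defs.c3 T * L3);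
       [unfold dot, L0, L1, L2, L3; ring | rewrite E0, E1, E2, E3; ring]).
  assert (H1 : x * dot T B1 + (x*c1 + y*al + z*ga) * dot B1 B1 + (x*c2 + y*be + z*de) * dot B1 B2 = 0)
   by (transitivity (Defs.c0 B1 * L0 + Defs.c1 B1 * L1 + Defs.c2 B1 * L2 + Defs.c3 B1 * L3);
       [unfold dot, L0, L1, L2, L3; ring | rewrite E0, E1, E2, E3; ring]).
  assert (H2 : x * dot T B2 + (x*c1 + y*al + z*ga) * dot B1 B2 + (x*c2 + y*be + z*de) * dot B2 B2 = 0)
   by (transitivity (Defs.c0 B2 * L0 + Defs.c1 B2 * L1 + Defs.c2 B2 * L2 + Defs.c3 B2 * L3);
       [unfold dot, L0, L1, L2, L3; ring | rewrite E0, E1, E2, E3; ring]).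
  rewrite hTT, hT1, hT2 in HT. rewrite hT1, h11, h12 in H1. rewrite hT2, h12, h22 in H2.
  assert (Hx : x = 0) by lra. subst x.
  assert (F1 : y * al + z * ga = 0) by lra.
  assert (F2 : y * be + z * de = 0) by lra.
  assert (Hy : y * (al * de - be * ga) = 0).
  { transitivity (de * (y * al + z * ga) - ga * (y * be + z * de)); [ring | rewrite F1, F2; ring]. }
  assert (Hz : z * (al * de - be * ga) = 0).
  { transitivity (al * (y * be + z * de) - be * (y * al + z * ga)); [ring | rewrite F1, F2; ring]. }
  split; [reflexivity|].
  destruct (Rmult_integral _ _ Hy) as [Hy'|Hy']; [|contradiction].
  destruct (Rmult_integral _ _ Hz) as [Hz'|Hz']; [|contradiction].
  split; assumption.
Qed.

Lemma par_alg (T N B1 B2 : V4) c1 c2 al be ga de :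
  dot T T = 1 -> dot N N = 1 -> dot B1 B1 = 1 -> dot B2 B2 = 1 ->
  dot T N = 0 -> dot T B1 = 0 -> dot T B2 = 0 ->
  dot N B1 = 0 -> dot N B2 = 0 -> dot B1 B2 = 0 ->
  parallel (cross4 (vadd T (vadd (vscale c1 B1) (vscale c2 B2)))
    (vadd (vscale al B1) (vscale be B2)) (vadd (vscale ga B1) (vscale de B2))) N.
Proof.
  intros hTT hNN h11 h22 hTN hT1 hT2 hN1 hN2 h12.
  pose proof (frame_par T N B1 B2 hTT hNN h11 h22 hTN hT1 hT2 hN1 hN2 h12) as HF.
  exists ((al * de - be * ga) * dot (cross4 T B1 B2) N).
  transitivity (vscale (al * de - be * ga) (cross4 T B1 B2)).
  - apply V4_ext; unfold cross4, det3, vadd, vscale; cb; ring.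
  - rewrite HF at 1. apply V4_ext; unfold vscale; cb; ring.
Qed.

Lemma dval f x d e : derivable_pt_lim f x d -> d = e -> derivable_pt_lim f x e.
Proof. intros H ->; exact H. Qed.

Lemma dconst (c x : R) : derivable_pt_lim (fun _ => c) x 0.
Proof. apply (derivable_pt_lim_const c x). Qed.

Lemma dplus f g x a b : derivable_pt_lim f x a -> derivable_pt_lim g x b ->
  derivable_pt_lim (fun y => f y + g y) x (a + b).
Proof. intros; apply (derivable_pt_lim_plus f g x a b); assumption. Qed.

Lemma dmul f g x a b : derivable_pt_lim f x a -> derivable_pt_lim g x b ->
  derivable_pt_lim (fun y => f y * g y) x (a * g x + f x * b).
Proof. intros; apply (derivable_pt_lim_mult f g x a b); assumption. Qed.

Ltac dtac := repeat (first [ apply dconst | eapply dplus | eapply dmul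
  | eassumption
  | match goal with H : forall _ _, derivable_pt_lim _ _ _ |- _ => eapply H end
  | match goal with H : forall _, derivable_pt_lim _ _ _ |- _ => eapply H end ]).

Theorem mainTheorem4
  (r T N B1 B2 : R -> V4) (k1 k2 k3 : R -> R)
  (L1 L2 T1 T2 Q1 Q2 t0 q0 : R)
  (l m n p ls lq ms mq ns nq ps pq : R -> R -> R)
  (U V W X U' V' W' X' : R -> R) :
  frenet_curve r T N B1 B2 k1 k2 k3 ->
  T1 <= t0 <= T2 -> Q1 <= q0 <= Q2 ->
  C1_2 l ls lq -> C1_2 m ms mq -> C1_2 n ns nq -> C1_2 p ps pq ->
  C1_1 U U' -> C1_1 V V' -> C1_1 W W' -> C1_1 X X' ->
  U t0 = 0 -> U' t0 = 0 -> V t0 = 0 -> V' t0 = 0 ->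
  (isogeodesic
     (surfP r T N B1 B2
        (fun s t q => l s q * U t) (fun s t q => m s q * V t)
        (fun s t q => n s q * W t) (fun s t q => p s q * X t))
     r N L1 L2 t0 q0
   <->
   forall s, L1 <= s <= L2 ->
     n s q0 * W t0 = 0 /\ p s q0 * X t0 = 0 /\
     n s q0 * W' t0 * pq s q0 * X t0 - nq s q0 * W t0 * p s q0 * X' t0 <> 0).
Proof.
  intros Hfr HT0 HQ0 Cl Cm Cn Cp CU CV CW CX HU0 HU'0 HV0 HV'0.
  destruct Hfr as [Horth [Hr [HT [HN [HB1 [HB2 Hk]]]]]].
  destruct Cl as [Hls [Hlq _]]. destruct Cm as [Hms [Hmq _]].
  destruct Cn as [Hns [Hnq _]]. destruct Cp as [Hps [Hpq _]].
  destruct CU as [HU _]. destruct CV as [HV _]. destruct CW as [HW _]. destruct CX as [HX _].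
  set (P := surfP r T N B1 B2 (fun s t q => l s q * U t) (fun s t q => m s q * V t)
        (fun s t q => n s q * W t) (fun s t q => p s q * X t)).
  assert (Dt : forall s, vderiv (fun y => P s y q0) t0
     (vadd (vscale (n s q0 * W' t0) (B1 s)) (vscale (p s q0 * X' t0) (B2 s)))).
  { intro s. unfold vderiv, P, surfP, vadd, vscale; cbn [Defs.c0 Defs.c1 Defs.c2 Defs.c3].
    repeat split; (eapply dval; [dtac | cbv beta; rewrite ?HU'0, ?HV'0; ring]). }
  assert (Dq : forall s, vderiv (fun y => P s t0 y) q0
     (vadd (vscale (nq s q0 * W t0) (B1 s)) (vscale (pq s q0 * X t0) (B2 s)))).
  { intro s. unfold vderiv, P, surfP, vadd, vscale; cbn [Defs.c0 Defs.c1 Defs.c2 Defs.c3].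
    repeat split; (eapply dval; [dtac | cbv beta; rewrite ?HU0, ?HV0; ring]). }
  assert (Ds : forall s, n s q0 * W t0 = 0 -> p s q0 * X t0 = 0 ->
     vderiv (fun y => P y t0 q0) s
     (vadd (T s) (vadd (vscale (ns s q0 * W t0) (B1 s)) (vscale (ps s q0 * X t0) (B2 s))))).
  { intros s Ha Hb.
    destruct (Hr s) as [R0 [R1 [R2 R3]]]. destruct (HT s) as [T0 [T1' [T2' T3]]].
    destruct (HN s) as [N0 [N1 [N2 N3]]]. destruct (HB1 s) as [P0 [P1 [P2 P3]]].
    destruct (HB2 s) as [Q0 [Q1' [Q2' Q3]]].
    unfold vderiv, P, surfP, vadd, vscale; cbn [Defs.c0 Defs.c1 Defs.c2 Defs.c3].
    unfold vadd, vscale in R0, R1, R2, R3, T0, T1', T2', T3, N0, N1, N2, N3,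
      P0, P1, P2, P3, Q0, Q1', Q2', Q3.
    cbn [Defs.c0 Defs.c1 Defs.c2 Defs.c3] in R0, R1, R2, R3, T0, T1', T2', T3, N0, N1, N2, N3,
      P0, P1, P2, P3, Q0, Q1', Q2', Q3.
    repeat split; (eapply dval; [dtac | cbv beta; rewrite ?HU0, ?HV0, ?Ha, ?Hb; ring]). }
  split.
  - intros Hiso s Hs.
    destruct (Hiso s Hs) as [HP [Ps [Pt [Pq [HdS [HdT [HdQ [Hind Hpar]]]]]]]].
    rewrite (vderiv_uniq _ _ _ _ HdT (Dt s)) in Hind.
    rewrite (vderiv_uniq _ _ _ _ HdQ (Dq s)) in Hind.
    destruct (Horth s) as [hTT [hNN [h11 [h22 [hTN [hT1 [hT2 [hN1 [hN2 h12]]]]]]]]].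
    assert (Hab : n s q0 * W t0 = 0 /\ p s q0 * X t0 = 0).
    { apply pr_alg with (B1 := B1 s) (B2 := B2 s); auto.
      intros i Hi; destruct Hi as [ -> | [ -> | [ -> | -> ] ] ];
      [pose proof (f_equal Defs.c0 HP) as E | pose proof (f_equal Defs.c1 HP) as E
      |pose proof (f_equal Defs.c2 HP) as E | pose proof (f_equal Defs.c3 HP) as E];
      unfold P, surfP, vadd, vscale in E; cbn [Defs.c0 Defs.c1 Defs.c2 Defs.c3] in E;
      rewrite HU0, HV0 in E; nra. }
    destruct Hab as [Ha Hb]. split; [exact Ha|]. split; [exact Hb|].
    intro Hc. apply (dep_alg _ _ _ _ _ _ _ Hind). nra.
  - intros H s Hs. destruct (H s Hs) as [Ha [Hb HD]].
    destruct (Horth s) as [hTT [hNN [h11 [h22 [hTN [hT1 [hT2 [hN1 [hN2 h12]]]]]]]]].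
    split.
    + apply V4_ext; unfold P, surfP, vadd, vscale; cbn [Defs.c0 Defs.c1 Defs.c2 Defs.c3];
      rewrite HU0, HV0, Ha, Hb; ring.
    + eexists; eexists; eexists.
      split; [apply (Ds s Ha Hb)|]. split; [apply Dt|]. split; [apply Dq|]. split.
      * apply indep_alg; auto. intro Hc; apply HD; nra.
      * apply par_alg; auto.
Qed.
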